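(* Let $\Gamma$ be a lattice satisfying the standing assumptions below, and let $\mathcal{F}=\{f\in C_2(\Gamma): |\iota(f)|=1\}$. Let $f,f'\in\mathcal{F}$ and let $\rho=(f_1=f,f_2,\dots,f_m=f')$ be a face path from $f$ to $f'$ with $m\ge 2$. Then the operator $W^Z_{f,f'}(\rho)=\prod_{i=1}^m Z_{f_i}$ commutes with every element of the stabilizer group of the 3D toric code on $\Gamma$, i.e. it is either a stabilizer or a logical operator.
   Context: $\Gamma$ is a finite, connected three-dimensional cell complex (lattice) with vertices $C_0(\Gamma)$, edges $C_1(\Gamma)$ (partial edges, incident on only one vertex, are allowed at the boundary), faces $C_2(\Gamma)$ and volumes $C_3(\Gamma)$. For a face $f$, $\partial(f)$ is its set of boundary edges; for a volume $\nu$, $\partial(\nu)$ is its set of boundary faces; for an edge $e$, $\iota(e)$ is the set of faces $f$ with $e\in\partial(f)$; for a face $f$, $\iota(f)$ is the set of volumes $\nu$ with $f\in\partial(\nu)$. Every face lies in the boundary of at most two volumes. Standing assumptions: (L1) $\Gamma$ has no boundaries in its interior; (L2) the boundary of every face of $\Gamma$ and of every face of the dual complex $\Gamma^*$ is either a closed path or an open path beginning and ending with partial edges; the dual complex is connected. The 3D toric code on $\Gamma$ places one qubit on each face; its stabilizer group is generated by $B_e=\prod_{f\in\iota(e)}Z_f$ for $e\in C_1(\Gamma)$ and $A_\nu=\prod_{f\in\partial(\nu)}X_f$ for $\nu\in C_3(\Gamma)$. A logical operator is a Pauli operator commuting with all stabilizers but not itself in the stabilizer group (up to phase). A face path is a sequence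 of faces $\rho=(f_1,\dots,f_m)$ together with a sequence of pairwise distinct volumes $\Lambda(\rho)=(\nu_1,\dots,\nu_{m-1})$ such that $f_i,f_{i+1}\in\partial(\nu_i)$ for all $i$; it is a face path from $f_1$ to $f_m$. *)

(* Defs.v *)
From mathcomp Require Import all_boot.
Set Implicit Arguments.
Unset Strict Implicit.
Unset Printing Implicit Defensive.

(* A finite 3D cell complex: vertices, edges (each incident on one or two
   vertices; one vertex = partial edge), faces with boundary edges, volumes
   with boundary faces; every face lies in the boundary of at most two
   volumes. *)
Record lattice := Lattice {
  Vx : finType;
  Ed : finType;
  Fc : finType;
  Vol : finType;
  ends : Ed -> {set Vx};
  ends_card : forall e, 0 < #|ends e| <= 2;
  bdF : Fc -> {set Ed};
  bdV : Vol -> {set Fc};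
  face_two : forall f, #|[set v | f \in bdV v]| <= 2
}.

Section Toric.
Variable G : lattice.

Definition iotaE (e : Ed G) : {set Fc G} := [set f | e \in bdF f].
Definition iotaF (f : Fc G) : {set Vol G} := [set v | f \in bdV v].

Definition calF : {set Fc G} := [set f | #|iotaF f| == 1].

(* Pauli operators on the face qubits, modulo phase, in the standard
   binary symplectic representation: (X-part, Z-part). *)
Definition pauli := ({ffun Fc G -> bool} * {ffun Fc G -> bool})%type.

Definition pI : pauli := ([ffun => false], [ffun => false]).
Definition pmul (P Q : pauli) : pauli :=
  ([ffun f => xorb (P.1 f) (Q.1 f)], [ffun f => xorb (P.2 f) (Q.2 f)]).
Definition Zon (S : {set Fc G}) : pauli := ([ffun => false], [ffun f => f \in S]).
Definition Xon (S : {set Fc G}) : pauli := ([ffun f => f \in S], [ffun => false]).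
Definition Zf (f : Fc G) : pauli := Zon [set f].

(* P and Q commute iff the symplectic form vanishes mod 2 *)
Definition pcommute (P Q : pauli) : Prop :=
  ~~ odd (\sum_(f : Fc G) ((P.1 f && Q.2 f) + (P.2 f && Q.1 f))).

Definition Bop (e : Ed G) : pauli := Zon (iotaE e).
Definition Aop (v : Vol G) : pauli := Xon (bdV v).

Inductive in_stab : pauli -> Prop :=
| stab_id : in_stab pI
| stab_B e : in_stab (Bop e)
| stab_A v : in_stab (Aop v)
| stab_mul P Q : in_stab P -> in_stab Q -> in_stab (pmul P Q).

Definition face_path (fs : seq (Fc G)) (vs : seq (Vol G)) : Prop :=
  [/\ size vs = (size fs).-1, uniq vs &
      forall i, i < size vs ->
        forall f0 v0, (nth f0 fs i \in bdV (nth v0 vs i)) /\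
                      (nth f0 fs i.+1 \in bdV (nth v0 vs i))].

Definition WZ (fs : seq (Fc G)) : pauli := foldr pmul pI (map Zf fs).

End Toric.

(* Main.v *)
Require Import Defs.
From mathcomp Require Import all_boot.
Set Implicit Arguments.
Unset Strict Implicit.

Section S.
Variable G : lattice.

Definition cX (W P : pauli G) : bool :=
  \big[addb/false]_(f : Fc G) ((W.1 f && P.2 f) (+) (W.2 f && P.1 f)).

Lemma pcommuteE W P : pcommute W P <-> ~~ cX W P.
Proof.
rewrite /pcommute /cX (@big_morph _ _ odd false addb 0 addn oddD erefl).
by rewrite (eq_bigr (fun f => (W.1 f && P.2 f) (+) (W.2 f && P.1 f))) // => f _;
  rewrite oddD !oddb.
Qed.

Lemma cX_mul W P Q : cX W (pmul P Q) = cX W P (+) cX W Q.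
Proof.
rewrite /cX -big_split /=; apply: eq_bigr => f _; rewrite !ffunE.
by case: (W.1 f); case: (W.2 f); case: (P.1 f); case: (P.2 f); case: (Q.1 f); case: (Q.2 f).
Qed.

Lemma WZ1 (s : seq (Fc G)) f : (WZ s).1 f = false.
Proof. by elim: s => [|x s IH]; rewrite /= ?ffunE // IH. Qed.

Lemma cX_A (s : seq (Fc G)) v : cX (WZ s) (Aop v) = odd (count (mem (bdV v)) s).
Proof.
rewrite /cX; elim: s => [|x s IH] /=.
  by rewrite big1 // => f _; rewrite !ffunE.
rewrite oddD oddb -IH.
transitivity (\big[addb/false]_(f : Fc G) (((x == f) && (f \in bdV v)) (+)
    ((WZ s).2 f && (f \in bdV v)))).
  apply: eq_bigr => f _; rewrite !ffunE WZ1 /= in_set1 eq_sym.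
  by case: (x == f); case: ((WZ s).2 f); case: (f \in bdV v).
rewrite big_split /=; congr addb.
rewrite (bigD1 x) //= eqxx /= big1 ?addbF // => f /negbTE; rewrite eq_sym => ->.
by []. 
by apply: eq_bigr => f _; rewrite !ffunE WZ1.
Qed.

Lemma one_vol (g : Fc G) u : g \in calF G -> g \in bdV u ->
  forall w, (g \in bdV w) = (w == u).
Proof.
rewrite /calF inE => /cards1P [x Hx] gu w.
have : u \in iotaF g by rewrite inE.
rewrite Hx inE => /eqP ->.
have -> : (g \in bdV w) = (w \in iotaF g) by rewrite inE.
by rewrite Hx inE.
Qed.

Lemma two_vol (g : Fc G) u u' : g \in bdV u -> g \in bdV u' -> u != u' ->
  forall w, (g \in bdV w) = (w == u) || (w == u').
Proof.
move=> gu gu' neq w.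
have sub : [set u; u'] \subset iotaF g.
  by apply/subsetP => y; rewrite !inE => /orP [] /eqP ->.
have : [set u; u'] == iotaF g.
  by rewrite eqEcard sub cards2 neq; exact: face_two.
move/eqP => E.
have -> : (g \in bdV w) = (w \in iotaF g) by rewrite inE.
by rewrite -E !inE.
Qed.

Lemma even_count (f f' : Fc G) (fs : seq (Fc G)) (vs : seq (Vol G)) v :
  f \in calF G -> f' \in calF G ->
  2 <= size fs ->
  head f fs = f -> last f fs = f' ->
  face_path fs vs -> ~~ odd (count (mem (bdV v)) fs).
Proof.
move=> Ff Ff' s2 hd lt [sz un pth].
set n := size vs.
have szf : size fs = n.+1 by rewrite /n sz; case: (size fs) s2.
have n0 : 0 < n by rewrite -ltnS -szf.
have key : forall i, i < n.+1 ->
  (nth f fs i \in bdV v : nat) =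
  ((0 < i) && (nth v vs i.-1 == v)) + ((i < n) && (nth v vs i == v)).
  move=> i lei.
  case: (posnP i) => [-> | ip].
    have [h1 _] := pth 0 n0 f v.
    rewrite nth0 hd in h1 *.
    by rewrite (one_vol Ff h1) n0 eq_sym.
  case: (ltngtP i n) => [iltn | // | ieq]; last first.
    have hn : n.-1 < n by rewrite ltn_predL.
    have [_ h2] := pth n.-1 hn f v.
    have Ln : nth f fs n = f' by rewrite -[n]/(n.+1.-1) -szf nth_last.
    rewrite prednK // Ln in h2.
    rewrite ieq Ln (one_vol Ff' h2) /= addn0 eq_sym.
    by [].
  move=> h; by have := leq_ltn_trans h lei; rewrite ltnn.
  have hi1 : i.-1 < n by rewrite (leq_ltn_trans (leq_pred i)).
  have [_ h1] := pth i.-1 hi1 f v.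
  have [h2 _] := pth i iltn f v.
  rewrite prednK // in h1.
  have neq : nth v vs i.-1 != nth v vs i.
    by rewrite nth_uniq // -(inj_eq succn_inj) prednK // neq_ltn ltnSn.
  rewrite (two_vol h1 h2 neq) /=.
  case: (v =P nth v vs i.-1) => [E|E] /=.
    have /negbTE -> : nth v vs i != v.
      by apply/eqP => e; move: neq; rewrite -E e eqxx.
    by rewrite addn0 -{1}E eqxx.
  have /negbTE -> : nth v vs i.-1 != v by apply/eqP => e; apply: E; rewrite e.
  by rewrite eq_sym.
rewrite -sum1_count big_mkcond (big_nth f) szf /=.
rewrite (eq_big_nat _ _ (F2 := fun i => ((0 < i) && (nth v vs i.-1 == v)) +
   ((i < n) && (nth v vs i == v)))); last first.
  by move=> i /andP [_ li]; rewrite -key //; case: (_ \in _).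
rewrite big_split /= big_nat_recl // big_nat_recr //= ltnn addn0 add0n.
have -> : \sum_(0 <= i < n) ((i < n) && (nth v vs i == v)) =
          \sum_(0 <= i < n) ((nth v vs i == v) : nat).
  by apply: eq_big_nat => i /andP [_ li]; rewrite li.
rewrite addnn odd_double //.
Qed.
End S.

Theorem lemma1 (G : lattice) (f f' : Fc G) (fs : seq (Fc G)) (vs : seq (Vol G)) :
  f \in calF G -> f' \in calF G ->
  2 <= size fs ->
  head f fs = f -> last f fs = f' ->
  face_path fs vs ->
  forall P : pauli G, in_stab P -> pcommute (WZ fs) P.
Proof.
move=> Ff Ff' s2 hd lt fp P HP; apply/pcommuteE.
elim: HP => [|e|v|P1 Q1 _ IH1 _ IH2].
- by rewrite /cX big1 // => g _; rewrite /pI /= !ffunE !andbF.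
- by rewrite /cX big1 // => g _; rewrite /Bop /Zon /= !ffunE WZ1 andbF.
- by rewrite cX_A; exact: (even_count v Ff Ff' s2 hd lt fp).
- by rewrite cX_mul; move/negbTE: IH1 => ->; move/negbTE: IH2 => ->.
Qed.
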